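(* There is an absolute constant $C$ such that the following holds. If $G=(U,V,E)$ is a path-restricted ordered bipartite graph in which every forward path has length (number of edges) at most $k$, then $|E|\le C\,k\,(|U|+|V|)$, i.e. $G$ has $O(k(|U|+|V|))$ edges.
   Context: An ordered bipartite graph is $G=(U,V,E)$ where $U,V$ are disjoint finite sets, each carrying a strict total order (both written $<$), and $E\subseteq U\times V$. A path is a sequence of edges in which consecutive edges share a vertex. A path visiting the vertices of $U$ in the order $u_1,\dots,u_k$ and those of $V$ in the order $v_1,\dots,v_l$ is a forward path if either $u_1<\dots<u_k$ and $v_1<\dots<v_l$, or $u_1>\dots>u_k$ and $v_1>\dots>v_l$. For $x\le y$ in $U$ write $\langle x,y\rangle=\{u\in U: x\le u\le y\}$, and similarly in $V$. If $u_a<u_b$ are the smallest and largest $U$-vertices and $v_c<v_d$ the smallest and largest $V$-vertices of a forward path $P$, the range of $P$ is $\{\langle u_a,u_b\rangle,\langle v_c,v_d\rangle\}$. A vertex of $P$ is non-terminal if it is adjacent along $P$ to two vertices of $P$. An edge is a back edge to $P$ if either it is $(u_a,v_j)$ with $v_j\in\langle v_c,v_d\rangle$ and $v_j>v'$ for some non-terminal vertex $v'\in V$ of $P$, or it is $(u_i,v_c)$ with $u_i\in\langle u_a,u_b\rangle$ and $u_i>u'$ for some non-terminal vertex $u'\in U$ of $P$. $G$ is a path-restricted ordered bipartite graph (PRBG) if no forward path in $G$ has a back edge in $E$. *)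

(* Defs.v *)
From mathcomp Require Import all_boot.
Set Implicit Arguments. Unset Strict Implicit. Unset Printing Implicit Defensive.

(* An ordered bipartite graph with |U| = m, |V| = n is modelled with
   U = 'I_m and V = 'I_n (natural order), and edge set E : {set 'I_m * 'I_n}.
   Vertices of the graph are elements of 'I_m + 'I_n (inl = U, inr = V). *)

Section OBG.
Variables (m n : nat).
Implicit Types (E : {set 'I_m * 'I_n}) (p : seq ('I_m + 'I_n)).

Definition adjb E (x y : 'I_m + 'I_n) : bool :=
  match x, y with
  | inl u, inr v => (u, v) \in E
  | inr v, inl u => (u, v) \in E
  | _, _ => false
  end.

Definition is_path E p : bool :=
  [&& 1 < size p, uniq p &
      (if p is x :: s then path (adjb E) x s else false)].

Definition plength p : nat := (size p).-1.

Definition getU (x : 'I_m + 'I_n) : option 'I_m :=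
  if x is inl u then Some u else None.
Definition getV (x : 'I_m + 'I_n) : option 'I_n :=
  if x is inr v then Some v else None.

Definition Uverts p : seq 'I_m := pmap getU p.
Definition Vverts p : seq 'I_n := pmap getV p.

Definition forward p : bool :=
  (sorted (fun a b : 'I_m => a < b) (Uverts p) &&
   sorted (fun a b : 'I_n => a < b) (Vverts p)) ||
  (sorted (fun a b : 'I_m => b < a) (Uverts p) &&
   sorted (fun a b : 'I_n => b < a) (Vverts p)).

(* non-terminal vertices: those at positions 1 .. size p - 2 *)
Definition interior p : seq ('I_m + 'I_n) := take (size p).-2 (behead p).
Definition ntU p : seq 'I_m := pmap getU (interior p).
Definition ntV p : seq 'I_n := pmap getV (interior p).

Definition is_minU p (u : 'I_m) : bool :=
  (u \in Uverts p) && all (fun w : 'I_m => u <= w) (Uverts p).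
Definition is_minV p (v : 'I_n) : bool :=
  (v \in Vverts p) && all (fun w : 'I_n => v <= w) (Vverts p).

Definition in_rangeU p (u : 'I_m) : bool :=
  has (fun w : 'I_m => w <= u) (Uverts p) && has (fun w : 'I_m => u <= w) (Uverts p).
Definition in_rangeV p (v : 'I_n) : bool :=
  has (fun w : 'I_n => w <= v) (Vverts p) && has (fun w : 'I_n => v <= w) (Vverts p).

Definition back_edge p (e : 'I_m * 'I_n) : bool :=
  [&& is_minU p e.1, in_rangeV p e.2 & has (fun v' : 'I_n => v' < e.2) (ntV p)] ||
  [&& is_minV p e.2, in_rangeU p e.1 & has (fun u' : 'I_m => u' < e.1) (ntU p)].

Definition PRBG E : Prop :=
  forall p, is_path E p -> forward p ->
    forall e, e \in E -> ~~ back_edge p e.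

End OBG.

(* Main.v *)
Require Import Defs.
From mathcomp Require Import all_boot.
From mathcomp Require Import zify.
Set Implicit Arguments. Unset Strict Implicit. Unset Printing Implicit Defensive.

Section Proof.
Variables m n : nat.
Implicit Types (E : {set 'I_m * 'I_n}) (p : seq ('I_m + 'I_n)).

Lemma path_sub E E' p : E' \subset E -> is_path E' p -> is_path E p.
Proof.
move=> sub; rewrite /is_path; case/and3P=> -> -> /=.
case: p => // x s; apply: sub_path => a b.
case: a => a; case: b => b //=; exact: (subsetP sub).
Qed.

Lemma notin_sorted (T : eqType) (r : rel T) (v w : T) (l : seq T) :
  transitive r -> irreflexive r -> sorted r (v :: l) -> r w v -> w \notin v :: l.
Proof.
move=> tr ir /= Hp rwv; rewrite inE; apply/orP => -[/eqP E1|Hin].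
  by subst; rewrite ir in rwv.
have := order_path_min tr Hp => /allP /(_ _ Hin) rvw.
by have := tr _ _ _ rwv rvw; rewrite ir.
Qed.

Lemma prepend_u E (rU : rel 'I_m) (rV : rel 'I_n) u v s w :
  transitive rV -> irreflexive rV ->
  is_path E [:: inl u, inr v & s] ->
  sorted rU (Uverts [:: inl u, inr v & s]) && sorted rV (Vverts [:: inl u, inr v & s]) ->
  (u, w) \in E -> rV w v ->
  is_path E [:: inr w, inl u, inr v & s] &&
  (sorted rU (Uverts [:: inr w, inl u, inr v & s]) && sorted rV (Vverts [:: inr w, inl u, inr v & s])).
Proof.
move=> trV irV /and3P[_ Hu Hp] /andP[sU sV] Ew rwv.
rewrite /Uverts /Vverts /= in sU sV *.
have nin := notin_sorted trV irV sV rwv.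
rewrite sU /= rwv sV /= /is_path /= andbT Ew.
move: Hu Hp => /= -> /andP[-> ->]; rewrite !andbT !inE /=; apply/negP => /orP[/eqP [] E1|Hin].
  by subst; rewrite irV in rwv.
move: nin; rewrite inE negb_or => /andP[_ /negP]; apply.
by rewrite mem_pmap; apply/mapP; exists (inr w).
Qed.

Lemma prepend_v E (rU : rel 'I_m) (rV : rel 'I_n) u v s w :
  transitive rU -> irreflexive rU ->
  is_path E [:: inr v, inl u & s] ->
  sorted rU (Uverts [:: inr v, inl u & s]) && sorted rV (Vverts [:: inr v, inl u & s]) ->
  (w, v) \in E -> rU w u ->
  is_path E [:: inl w, inr v, inl u & s] &&
  (sorted rU (Uverts [:: inl w, inr v, inl u & s]) && sorted rV (Vverts [:: inl w, inr v, inl u & s])).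
Proof.
move=> trU irU /and3P[_ Hu Hp] /andP[sU sV] Ew rwu.
rewrite /Uverts /Vverts /= in sU sV *.
have nin := notin_sorted trU irU sU rwu.
rewrite sV /= rwu sU /= /is_path /= andbT Ew.
move: Hu Hp => /= -> /andP[-> ->]; rewrite !andbT !inE /=; apply/negP => /orP[/eqP [] E1|Hin].
  by subst; rewrite irU in rwu.
move: nin; rewrite inE negb_or => /andP[_ /negP]; apply.
by rewrite mem_pmap; apply/mapP; exists (inl w).
Qed.


Lemma card_key (T K : finType) (key : T -> K) (A : {set T}) :
  {in A &, forall e e', key e = key e' -> e = e'} -> #|A| <= #|K|.
Proof.
move=> inj; rewrite -(card_in_imset inj); exact: max_card.
Qed.

Definition A1 E := [set e in E | [forall e' in E, (e'.1 == e.1) ==> (e.2 <= e'.2)]].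
Definition A2 E := [set e in E | [forall e' in E, (e'.1 == e.1) ==> (e'.2 <= e.2)]].
Definition A3 E := [set e in E | [forall e' in E, (e'.2 == e.2) ==> (e.1 <= e'.1)]].
Definition A4 E := [set e in E | [forall e' in E, (e'.2 == e.2) ==> (e'.1 <= e.1)]].

Lemma cA1 E : #|A1 E| <= m.
Proof.
suff: #|A1 E| <= #|'I_m| by rewrite card_ord.
apply: (card_key (key:=fst)) => -[a b] [a' b'].
rewrite !inE /= => /andP[H1 /forall_inP F1] /andP[H2 /forall_inP F2] /= Ea; subst a'.
have := F1 _ H2; have := F2 _ H1; rewrite /= eqxx /= => l1 l2.
by congr pair; apply: val_inj => /=; apply/eqP; rewrite eqn_leq l1 l2.
Qed.

Lemma cA2 E : #|A2 E| <= m.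
Proof.
suff: #|A2 E| <= #|'I_m| by rewrite card_ord.
apply: (card_key (key:=fst)) => -[a b] [a' b'].
rewrite !inE /= => /andP[H1 /forall_inP F1] /andP[H2 /forall_inP F2] /= Ea; subst a'.
have := F1 _ H2; have := F2 _ H1; rewrite /= eqxx /= => l1 l2.
by congr pair; apply: val_inj => /=; apply/eqP; rewrite eqn_leq l1 l2.
Qed.

Lemma cA3 E : #|A3 E| <= n.
Proof.
suff: #|A3 E| <= #|'I_n| by rewrite card_ord.
apply: (card_key (key:=snd)) => -[a b] [a' b'].
rewrite !inE /= => /andP[H1 /forall_inP F1] /andP[H2 /forall_inP F2] /= Ea; subst b'.
have := F1 _ H2; have := F2 _ H1; rewrite /= eqxx /= => l1 l2.
by congr pair; apply: val_inj => /=; apply/eqP; rewrite eqn_leq l1 l2.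
Qed.

Lemma cA4 E : #|A4 E| <= n.
Proof.
suff: #|A4 E| <= #|'I_n| by rewrite card_ord.
apply: (card_key (key:=snd)) => -[a b] [a' b'].
rewrite !inE /= => /andP[H1 /forall_inP F1] /andP[H2 /forall_inP F2] /= Ea; subst b'.
have := F1 _ H2; have := F2 _ H1; rewrite /= eqxx /= => l1 l2.
by congr pair; apply: val_inj => /=; apply/eqP; rewrite eqn_leq l1 l2.
Qed.


Lemma wit1 E e : e \in E -> e \notin A1 E -> exists2 e', e' \in E & (e'.1 == e.1) && (e'.2 < e.2).
Proof.
move=> He; rewrite inE He /= => /forall_inPn [e' He' H]; exists e' => //.
by move: H; rewrite negb_imply -ltnNge.
Qed.
Lemma wit2 E e : e \in E -> e \notin A2 E -> exists2 e', e' \in E & (e'.1 == e.1) && (e.2 < e'.2).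
Proof.
move=> He; rewrite inE He /= => /forall_inPn [e' He' H]; exists e' => //.
by move: H; rewrite negb_imply -ltnNge.
Qed.
Lemma wit3 E e : e \in E -> e \notin A3 E -> exists2 e', e' \in E & (e'.2 == e.2) && (e'.1 < e.1).
Proof.
move=> He; rewrite inE He /= => /forall_inPn [e' He' H]; exists e' => //.
by move: H; rewrite negb_imply -ltnNge.
Qed.
Lemma wit4 E e : e \in E -> e \notin A4 E -> exists2 e', e' \in E & (e'.2 == e.2) && (e.1 < e'.1).
Proof.
move=> He; rewrite inE He /= => /forall_inPn [e' He' H]; exists e' => //.
by move: H; rewrite negb_imply -ltnNge.
Qed.

Definition bnd E k := forall p, is_path E p -> forward p -> plength p <= k.

Lemma trl (T : nat) : transitive (fun a b : 'I_T => a < b).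
Proof. move=> y x z; exact: ltn_trans. Qed.
Lemma trg (T : nat) : transitive (fun a b : 'I_T => b < a).
Proof. move=> y x z h1 h2; exact: ltn_trans h2 h1. Qed.
Lemma irl (T : nat) : irreflexive (fun a b : 'I_T => a < b).
Proof. move=> x; exact: ltnn. Qed.
Lemma irg (T : nat) : irreflexive (fun a b : 'I_T => b < a).
Proof. move=> x; exact: ltnn. Qed.

Lemma main k : forall E, bnd E k -> #|E| <= 2 * k * (m + n).
Proof.
elim: k => [|k IH] E hb.
  rewrite muln0 mul0n leqn0 cards_eq0; apply/eqP/setP => -[u v]; rewrite inE.
  apply/negP => Huv.
  have := hb [:: inl u; inr v].
  by rewrite /is_path /forward /Uverts /Vverts /plength /= Huv /= => /(_ isT isT).
set R := A1 E :|: A2 E :|: A3 E :|: A4 E.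
set E' := E :\: R.
have sub : E' \subset E by apply: subsetDl.
have hb' : bnd E' k.
  move=> [|x1 [|x2 s]] Hp Hf; try by case/and3P: Hp.
  have HpE := path_sub sub Hp.
  move: (Hp) => /and3P[_ _ /andP[Hadj _]].
  case: x1 Hadj Hp Hf HpE => [u|v]; case: x2 => [a|b] //= Huv Hp Hf HpE.
    rename b into v.
    have [HE HR] : (u, v) \in E /\ (u, v) \notin R.
      by move: Huv; rewrite inE => /andP[].
    move: HR; rewrite /R !in_setU !negb_or => /andP[/andP[/andP[n1 n2] n3] n4].
    case/orP: Hf => Hf.
      have [[u' w] Ew /andP[/eqP /= eu lw]] := wit1 HE n1; subst u'.
      have := prepend_u (@trl n) (@irl n) HpE Hf Ew lw.
      move=> /andP[P1 P2]; have := hb _ P1; rewrite /forward P2 /plength /=.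
      by move=> /(_ isT).
    have [[u' w] Ew /andP[/eqP /= eu lw]] := wit2 HE n2; subst u'.
    have := prepend_u (@trg n) (@irg n) HpE Hf Ew lw.
    move=> /andP[P1 P2]; have := hb _ P1; rewrite /forward P2 orbT /plength /=.
    by move=> /(_ isT).
  rename a into u.
  have [HE HR] : (u, v) \in E /\ (u, v) \notin R.
    by move: Huv; rewrite inE => /andP[].
  move: HR; rewrite /R !in_setU !negb_or => /andP[/andP[/andP[n1 n2] n3] n4].
  case/orP: Hf => Hf.
    have [[w v'] Ew /andP[/eqP /= eu lw]] := wit3 HE n3; subst v'.
    have := prepend_v (@trl m) (@irl m) HpE Hf Ew lw.
    move=> /andP[P1 P2]; have := hb _ P1; rewrite /forward P2 /plength /=.
    by move=> /(_ isT).
  have [[w v'] Ew /andP[/eqP /= eu lw]] := wit4 HE n4; subst v'.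
  have := prepend_v (@trg m) (@irg m) HpE Hf Ew lw.
  move=> /andP[P1 P2]; have := hb _ P1; rewrite /forward P2 orbT /plength /=.
  by move=> /(_ isT).
have h1 := IH _ hb'.
have h2 : #|E| <= #|E' :|: R|.
  apply: subset_leq_card; apply/subsetP => e He; rewrite in_setU in_setD He andbT orNb.
  by [].
have := cA1 E; have := cA2 E; have := cA3 E; have := cA4 E.
move: h2; rewrite /R !cardsU; lia.
Qed.

End Proof.

Theorem lemma8 :
  exists C : nat, forall (m n : nat) (E : {set 'I_m * 'I_n}) (k : nat),
    PRBG E ->
    (forall p : seq ('I_m + 'I_n), is_path E p -> forward p -> plength p <= k) ->
    #|E| <= C * k * (m + n).
Proof.
exists 2 => m n E k _ hb; exact: main hb.
Qed.
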